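(* Suppose $\rho\in\mathcal{P}$. Then there is a positive constant $C_9$ such that $|V_c(x,y)|\le C_9$ for all $(x,y)$ with $x<-3a$ and for all $0<\delta\le\delta_\mu$.
   Context: Fix $a>0$. For $0<\delta<1$ and constants $\beta>0$, $\lambda\in\mathbb{R}$ ($\lambda$ feasible: $\lambda>0$ if $0<\beta<1$, $\lambda\ge-1$ if $\beta=1$, $\lambda\ne0$ if $\beta>1$), put $\mu=\delta+\lambda\delta^{\beta}$, and let $\delta_\mu\in(0,1)$ be a number with $\mu\ge0$ for $0<\delta\le\delta_\mu$. The dielectric constant is $\varepsilon_c=1+\mathrm{i}\mu$ for $x<0$, $\varepsilon_s=-1+\mathrm{i}\delta$ for $0\le x\le a$, $\varepsilon_m=1$ for $x>a$. Let $\mathcal{M}=\{(x,y)\in\mathbb{R}^2:x>a\}$. $\mathcal{P}$ is the set of real-valued $\rho\in L^2(\mathcal{M})\cap L^\infty(\mathcal{M})$ with compact support in $\mathcal{M}$, $0<|\operatorname{supp}\rho|<\infty$ and $\int\!\!\int\rho=0$; $\rho$ is extended by $0$. $d_0,d_1$ are the minimal and maximal $x$-coordinates of $\operatorname{supp}\rho$. Fourier transform in $y$: $\widehat f(x,k)=\int f(x,y)\mathrm{e}^{-\mathrm{i}ky}\mathrm{d}y$; $I_k=\int_{d_0}^{d_1}\widehat\rho(s,k)\mathrm{e}^{-|k|s}\mathrm{d}s$. Let $\chi_c=\varepsilon_s/\varepsilon_c$, $\psi_k^+=\frac{1}{2\chi_c}[(\chi_c+1)\mathrm{e}^{|k|a}+(\chi_c-1)\mathrm{e}^{-|k|a}]$,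 $\psi_k^-=\frac{|k|\varepsilon_s}{2\chi_c}[(\chi_c+1)\mathrm{e}^{|k|a}-(\chi_c-1)\mathrm{e}^{-|k|a}]$, $A_k=I_k/(\mathrm{e}^{-|k|a}(|k|\psi_k^++\psi_k^-))$. The potential $V$ is defined by its $y$-Fourier transform: for $k\ne0$, $\widehat V(x,k)=A_k\mathrm{e}^{|k|x}$ for $x<0$; $\widehat V(x,k)=\frac{A_k}{2\chi_c}[(\chi_c+1)\mathrm{e}^{|k|x}+(\chi_c-1)\mathrm{e}^{-|k|x}]$ for $0\le x\le a$; $\widehat V(x,k)=A_k\psi_k^+\cosh(|k|(x-a))+\frac{A_k\psi_k^-}{|k|}\sinh(|k|(x-a))+\frac1{|k|}\int_a^x\sinh(|k|(x'-x))\widehat\rho(x',k)\mathrm{d}x'$ for $x>a$. It solves $-\nabla\cdot(\varepsilon\nabla V)=\rho$ in $\mathbb{R}^2$ with $V$, $\varepsilon\partial_xV$ continuous across $x=0,a$ and $\partial_xV\to0$ as $|x|\to\infty$. $V_c=V$ restricted to $\{x<0\}$, where $V$ is harmonic; pointwise values refer to its smooth representative. *)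

(* Defs.v *)
From HB Require Import structures.
From mathcomp Require Import all_boot all_order all_algebra.
From mathcomp Require Import all_classical all_reals all_analysis.
From mathcomp Require Import complex.

Set Implicit Arguments.
Unset Strict Implicit.
Unset Printing Implicit Defensive.
Import Order.TTheory GRing.Theory Num.Theory.
Local Open Scope ring_scope.
Local Open Scope classical_set_scope.

Section Defs.
Variable R : realType.

Definition lebR := (@lebesgue_measure R).

Definition cexpi (t : R) : R[i] := Complex (cos t) (sin t).

Definition cint (f : R -> R[i]) : R[i] :=
  Complex (Rintegral lebR setT (fun t => complex.Re (f t)))
          (Rintegral lebR setT (fun t => complex.Im (f t))).

Definition cmod (z : R[i]) : R := Num.sqrt (complex.Re z ^+ 2 + complex.Im z ^+ 2).

Definition rC (r : R) : R[i] := Complex r 0.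

Definition rho_hat (rho : R -> R -> R) (x k : R) : R[i] :=
  cint (fun y => rC (rho x y) * cexpi (- (k * y))).

(* I_k = \int rho_hat(s,k) e^{-|k|s} ds  (rho_hat(.,k) vanishes outside [d0,d1]) *)
Definition Ik (rho : R -> R -> R) (k : R) : R[i] :=
  cint (fun s => rho_hat rho s k * rC (expR (- (`|k| * s)))).

Definition mu_of (beta lam delta : R) : R := delta + lam * (delta `^ beta).

Definition eps_c (beta lam delta : R) : R[i] := Complex 1 (mu_of beta lam delta).
Definition eps_s (delta : R) : R[i] := Complex (-1) delta.
Definition chi_c (beta lam delta : R) : R[i] := eps_s delta / eps_c beta lam delta.

Definition psi_plus (a beta lam delta k : R) : R[i] :=
  let chi := chi_c beta lam delta in
  (2 * chi)^-1 * ((chi + 1) * rC (expR (`|k| * a)) + (chi - 1) * rC (expR (- (`|k| * a)))).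

Definition psi_minus (a beta lam delta k : R) : R[i] :=
  let chi := chi_c beta lam delta in
  rC `|k| * eps_s delta / (2 * chi) *
    ((chi + 1) * rC (expR (`|k| * a)) - (chi - 1) * rC (expR (- (`|k| * a)))).

Definition Ak (a beta lam : R) (rho : R -> R -> R) (delta k : R) : R[i] :=
  Ik rho k / (rC (expR (- (`|k| * a))) *
              (rC `|k| * psi_plus a beta lam delta k + psi_minus a beta lam delta k)).

Definition Vc (a beta lam : R) (rho : R -> R -> R) (delta x y : R) : R[i] :=
  rC ((2 * pi)^-1) *
  cint (fun k => Ak a beta lam rho delta k * rC (expR (`|k| * x)) * cexpi (k * y)).

(* The class P (rho given as a function on R^2, extended by 0 outside M = {x > a}) *)
Definition in_P (a : R) (rho : R -> R -> R) : Prop :=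
  measurable_fun setT (fun p : R * R => rho p.1 p.2) /\
  (exists M : R, forall x y, `|rho x y| <= M) /\
  (exists x0 x1 y0 y1 : R, a < x0 /\
     forall x y, rho x y != 0 -> (x0 <= x <= x1) /\ (y0 <= y <= y1)) /\
  (0%E < (product_measure1 lebR lebR) [set p | rho p.1 p.2 != 0%R])%E /\
  ((\int[product_measure1 lebR lebR]_p (rho p.1 p.2)%:E)%E = 0%E).

End Defs.

(* Main.v *)
Require Import Defs.
From HB Require Import structures.
From mathcomp Require Import all_boot all_order all_algebra.
From mathcomp Require Import all_classical all_reals all_analysis.
From mathcomp Require Import complex.
From mathcomp Require Import lra ring measurable_realfun.
Import Order.TTheory GRing.Theory Num.Theory.
Import numFieldTopology.Exports numFieldNormedType.Exports.
Local Open Scope ring_scope.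
Local Open Scope classical_set_scope.




Section GenInt.
Context {R : realType} d (T : measurableType d) (m : {measure set T -> \bar R}).

Lemma nn_int_mono (f g : T -> \bar R) : (forall x, 0 <= f x)%E -> (forall x, f x <= g x)%E ->
  (\int[m]_x f x <= \int[m]_x g x)%E.
Proof.
move=> f0 fg.
have g0 : forall x, (0 <= g x)%E by move=> x; exact: le_trans (f0 x) (fg x).
rewrite !ge0_integralTE//; apply: ereal_sup_le => _ [h /= hf <-].
by exists h => //= x; exact: le_trans (hf x) (fg x).
Qed.

Lemma Rint_abs_le (f g : T -> R) : (forall x, `|f x| <= g x) ->
  m.-integrable setT (EFin \o g) ->
  `|Rintegral m setT f| <= Rintegral m setT g.
Proof.
Local Open Scope ereal_scope.
move=> fg ig.
have g0 : forall x, (0 <= g x)%R by move=> x; exact: le_trans (normr_ge0 _) (fg x).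
have G0 : (0 <= \int[m]_x (g x)%:E)%E by apply: integral_ge0 => x _; rewrite lee_fin.
have Gfin : (\int[m]_x (g x)%:E < +oo)%E.
  apply: le_lt_trans (integrableP _ _ _ ig).2.
  apply: nn_int_mono => x /=; first by rewrite lee_fin.
  by rewrite lee_fin ler_norm.
set G := (\int[m]_x (g x)%:E)%E in G0 Gfin *.
have hA : forall h : T -> \bar R, (forall x, 0 <= h x)%E -> (forall x, h x <= (g x)%:E)%E ->
   exists2 a : R, (\int[m]_x h x = a%:E)%E & (0 <= a <= fine G)%R.
  move=> h h0 hg.
  have A0 : (0 <= \int[m]_x h x)%E by apply: integral_ge0.
  have AG : (\int[m]_x h x <= G)%E by exact: nn_int_mono.
  have Af : \int[m]_x h x \is a fin_num.
    by rewrite ge0_fin_numE //; exact: le_lt_trans AG Gfin.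
  exists (fine (\int[m]_x h x)); first by rewrite fineK.
  rewrite fine_ge0 //=; rewrite -lee_fin fineK // fineK //.
  by rewrite ge0_fin_numE.
have hp : forall x, ((EFin \o f)^\+ x <= (g x)%:E).
  move=> x; rewrite funeposE /= -EFin_max lee_fin.
  by rewrite ge_max g0 andbT; apply: le_trans (fg x); exact: ler_norm.
have hn : forall x, ((EFin \o f)^\- x <= (g x)%:E).
  move=> x; rewrite funenegE /= -EFin_max lee_fin.
  rewrite ge_max g0 andbT; apply: le_trans (fg x); rewrite -normrN; exact: ler_norm.
have [a Ae /andP[a0 aG]] := hA ((EFin \o f)^\+) (fun x => funepos_ge0 _ x) hp.
have [b Be /andP[b0 bG]] := hA ((EFin \o f)^\-) (fun x => funeneg_ge0 _ x) hn.
rewrite /Rintegral integralE Ae Be /= ler_norml; apply/andP; split; lra.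
Local Close Scope ereal_scope.
Qed.
End GenInt.

Section Pt.
Variable R : realType.

Lemma lip1 (f df : R -> R) : (forall x : R, is_derive x (1:R) f (df x)) -> continuous f ->
  (forall x, `|df x| <= 1) -> forall u v, `|f u - f v| <= `|u - v|.
Proof.
move=> fd fc d1.
have key : forall u v, u <= v -> `|f u - f v| <= `|u - v|.
  move=> u v uv.
  have [c _ E] := MVT_segment uv (fun x _ => fd x) (continuous_subspaceT fc).
  rewrite distrC E normrM (distrC u v); apply: ler_piMl => //.
move=> u v; have [uv|vu] := leP u v; first exact: key.
by rewrite distrC (distrC u); apply: key; exact: ltW.
Qed.

Lemma abs_sin_le (u : R) : `|sin u| <= `|u|.
Proof.
have := @lip1 sin cos (@is_derive_sin R) (@continuous_sin R) (@cos_max R) u 0.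
by rewrite sin0 !subr0.
Qed.

Lemma abs_cos1_le (u : R) : `|cos u - 1| <= `|u|.
Proof.
have := @lip1 cos (fun x => - sin x) (@is_derive_cos R) (@continuous_cos R) _ u 0.
rewrite cos0 subr0; apply => x; rewrite normrN; exact: sin_max.
Qed.

Lemma absy_le {y y0 y1 : R} : y0 <= y <= y1 -> `|y| <= `|y0| + `|y1|.
Proof.
move=> /andP[h1 h2]; have a1 := ler_norm y1; have a2 := ler_norm (- y0).
rewrite normrN in a2; have a3 := normr_ge0 y0; have a4 := normr_ge0 y1.
have [y0p|y0n] := leP 0 y.
  by rewrite ger0_norm //; lra.
by rewrite ltr0_norm //; lra.
Qed.

Lemma pt_re (r M k s y x1 y0 y1 : R) : `|r| <= M -> 0 <= s <= x1 -> y0 <= y <= y1 ->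
  `|r * cos (- (k * y)) * expR (- (`|k| * s)) - r| <= `|k| * (M * (`|x1| + `|y0| + `|y1|)).
Proof.
move=> rM /andP[s0 sx] hy.
have hyb := absy_le (y:=y) hy.

set e := expR _.
have e0 : 0 < e by exact: expR_gt0.
have e1 : e <= 1 by rewrite /e -expR0 ler_expR oppr_le0 mulr_ge0.
have he : 1 - e <= `|k| * s.
  have := expR_ge1Dx (- (`|k| * s)); rewrite -/e; lra.
have hc := abs_cos1_le (- (k * y)).
rewrite normrN normrM in hc.
have hx1 : s <= `|x1| by apply: le_trans sx (ler_norm _).
have kk : 0 <= `|k| by [].
have h : `|cos (- (k * y)) * e - 1| <= `|k| * (`|x1| + `|y0| + `|y1|).
  rewrite (_ : cos (- (k * y)) * e - 1 = (cos (- (k * y)) - 1) * e - (1 - e)); last by ring.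
  apply: le_trans (ler_normB _ _) _.
  rewrite normrM (ger0_norm (ltW e0)) (ger0_norm (_ : 0 <= 1 - e)); last by lra.
  have : `|cos (- (k * y)) - 1| * e <= `|k| * `|y|.
    apply: le_trans (_ : `|cos (- (k * y)) - 1| * 1 <= _); first by rewrite ler_wpM2l.
    by rewrite mulr1.
  nra.
rewrite (_ : r * cos (- (k * y)) * e - r = r * (cos (- (k * y)) * e - 1)); last by ring.
rewrite normrM.
have := normr_ge0 (cos (- (k * y)) * e - 1).
have := normr_ge0 r.
nra.
Qed.

Lemma pt_im (r M k s y x1 y0 y1 : R) : `|r| <= M -> 0 <= s -> y0 <= y <= y1 ->
  `|r * sin (- (k * y)) * expR (- (`|k| * s))| <= `|k| * (M * (`|x1| + `|y0| + `|y1|)).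
Proof.
move=> rM s0 hy.
have hyb := absy_le (y:=y) hy.

set e := expR _.
have e0 : 0 < e by exact: expR_gt0.
have e1 : e <= 1 by rewrite /e -expR0 ler_expR oppr_le0 mulr_ge0.
have hs := abs_sin_le (- (k * y)).
rewrite normrN normrM in hs.
rewrite !normrM (ger0_norm (ltW e0)).
have a1 := normr_ge0 (sin (- (k * y))).
have a2 := normr_ge0 r. have a3 := normr_ge0 x1. have a4 := normr_ge0 k.
have b1 : `|sin (- (k * y))| * e <= `|k| * (`|y0| + `|y1|).
  apply: le_trans (_ : `|sin (- (k * y))| * 1 <= _); first by rewrite ler_wpM2l.
  by rewrite mulr1 (le_trans hs) // ler_wpM2l.
have b2 : 0 <= `|sin (- (k * y))| * e by rewrite mulr_ge0 // ltW.
rewrite -mulrA.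
apply: le_trans (_ : M * (`|k| * (`|y0| + `|y1|)) <= _).
  apply: ler_pM => //.
have M0 : 0 <= M := le_trans a2 rM.
have := mulr_ge0 (mulr_ge0 a4 a3) M0.
rewrite (_ : `|k| * (M * (`|x1| + `|y0| + `|y1|)) = M * (`|k| * (`|y0| + `|y1|)) + `|k| * `|x1| * M); last by ring.
lra.
Qed.
End Pt.




Section Aux2.
Variable R : realType.
Local Notation mu := (@lebesgue_measure R).

Lemma cont_expabs (a : R) : continuous (fun k : R => expR (- (a * `|k|))).
Proof.
move=> x; apply: continuous_comp; last exact: continuous_expR.
apply: continuousN; apply: continuousM; first exact: cst_continuous.
exact: norm_continuous.
Qed.

Lemma integrable_expabs (a : R) : 0 < a ->
  mu.-integrable setT (EFin \o (fun k : R => expR (- (a * `|k|)))).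
Proof.
move=> a0.
have mf : measurable_fun setT (fun k : R => expR (- (a * `|k|))).
  exact: continuous_measurable_fun (cont_expabs a).
apply/integrableP; split; first exact/measurable_EFinP.
under eq_integral do rewrite /= ger0_norm ?expR_ge0//.
rewrite ge0_symfun_integralT //; last 2 first.
  exact: cont_expabs.
  by move=> x /=; rewrite normrN.
rewrite (_ : (\int[mu]_(x in [set x | (0 <= x)%R]) (expR (- (a * `|x|)))%:E)%E =
            (\int[mu]_(x in [set x | (0 <= x)%R]) (a^-1 * exponential_pdf a x)%:E)%E); last first.
  apply: eq_integral => x; rewrite inE /= => x0.
  rewrite exponential_pdfE //=; congr EFin.
  by rewrite mulrA mulVf ?gt_eqF // mul1r ger0_norm // mulNr.
have mp : measurable_fun setT (fun x => a^-1 * exponential_pdf a x).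
  apply: measurable_funM; first exact: measurable_cst.
  exact: measurable_exponential_pdf.
apply: (@le_lt_trans _ _ (2%:E * \int[mu]_x (a^-1 * exponential_pdf a x)%:E)%E).
  rewrite lee_pmul2l //; apply: ge0_subset_integral => //.
  - by rewrite -set_itvcy.
  - by apply/measurable_EFinP.
  - by move=> x _; rewrite lee_fin; apply: mulr_ge0; [rewrite invr_ge0 ltW // | apply: exponential_pdf_ge0; exact: ltW].
under eq_integral do rewrite EFinM.
rewrite ge0_integralZl_EFin //.
- by rewrite integral_exponential_pdf // mule1 -EFinM ltry.
- by move=> x _; rewrite lee_fin; apply: exponential_pdf_ge0; exact: ltW.
- by apply/measurable_EFinP; exact: measurable_exponential_pdf.
- by rewrite invr_ge0 ltW.
Qed.
End Aux2.




Section Aux4.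
Variable R : realType.
Local Notation mu := (@lebR R).
Local Notation mu2 := (product_measure1 (@lebR R) (@lebR R)).

Lemma fubR (F : R -> R -> R) :
  mu2.-integrable setT (fun p => (F p.1 p.2)%:E) ->
  (forall s, mu.-integrable setT (EFin \o F s)) ->
  Rintegral mu setT (fun s => Rintegral mu setT (F s)) =
  Rintegral mu2 setT (fun p => F p.1 p.2).
Proof.
move=> iF iFs; rewrite /Rintegral; congr fine.
rewrite -(integral12_prod_meas1 iF).
apply: eq_integral => s _; rewrite /fubini_F /= fineK //.
exact: integrable_fin_num (iFs s).
Qed.
End Aux4.




Section Aux5.
Variable R : realType.
Local Notation mu := (@lebR R).
Local Notation mu2 := (product_measure1 (@lebR R) (@lebR R)).

Lemma box_integrable (x0 x1 y0 y1 : R) :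
  mu2.-integrable setT (fun p : R * R => (\1_(`[x0, x1] `*` `[y0, y1]) p)%:E).
Proof.
have mA : measurable (`[x0, x1] `*` `[y0, y1] : set (R * R)).
  by apply: measurableX.
apply/integrableP; split.
  by apply/measurable_EFinP; exact: measurable_indic.
under eq_integral do rewrite gee0_abs ?lee_fin //.
rewrite integral_indic // setIT.
have m1 : measurable (`[x0, x1] : set R) by [].
have m2 : measurable (`[y0, y1] : set R) by [].
have := product_measure1E mu mu m1 m2.
rewrite /= => ->.
by rewrite !lebesgue_measure_itv /=; case: ifP; case: ifP => //= _ _;
  rewrite ?mule0 ?mul0e -?EFinD -?EFinM ?ltry.
Qed.

Lemma bounded_integrable (F : R -> R -> R) (c x0 x1 y0 y1 : R) :
  measurable_fun setT (fun p : R * R => F p.1 p.2) ->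
  (forall s y, `|F s y| <= c) ->
  (forall s y, F s y != 0 -> (x0 <= s <= x1) /\ (y0 <= y <= y1)) ->
  mu2.-integrable setT (fun p => (F p.1 p.2)%:E) /\
  (forall s, mu.-integrable setT (EFin \o F s)).
Proof.
move=> mF Fc Fsupp; split.
  apply: (le_integrable measurableT _ _ (integrableZl measurableT c (box_integrable x0 x1 y0 y1))).
    exact/measurable_EFinP.
  move=> [s y] _ /=; rewrite lee_fin.
  have [/eqP ->|nz] := boolP (F s y == 0); first by rewrite normr0.
  have [/andP[h1 h2] /andP[h3 h4]] := Fsupp s y nz.
  rewrite indicE (_ : (s, y) \in _ = true) ?mulr1; last first.
    by apply/mem_set; split; rewrite /= in_itv /= ?h1 ?h2 ?h3 ?h4. apply: le_trans (Fc s y) _; exact: ler_norm.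
move=> s.
apply: (le_integrable measurableT _ _ (integrableZl measurableT c (@integrable_indic_itv R y0 y1 true false))).
  apply/measurable_EFinP.
  exact: (measurableT_comp mF (pair1_measurable s)).
move=> y _ /=; rewrite lee_fin.
have [/eqP ->|nz] := boolP (F s y == 0); first by rewrite normr0.
have [_ /andP[h3 h4]] := Fsupp s y nz.
rewrite indicE (_ : y \in _ = true) ?mulr1; last first.
  by apply/mem_set; rewrite /= in_itv /= h3 h4.
apply: le_trans (Fc s y) _; exact: ler_norm.
Qed.
End Aux5.




Section C.
Variable R : realType.
Lemma Re_mulrC (z : R[i]) (r : R) : complex.Re (z * rC r) = complex.Re z * r.
Proof. by case: z => a b /=; rewrite mulr0 subr0. Qed.
Lemma Im_mulrC (z : R[i]) (r : R) : complex.Im (z * rC r) = complex.Im z * r.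
Proof. by case: z => a b /=; rewrite mulr0 add0r. Qed.
Lemma Re_rCexpi (r t : R) : complex.Re (rC r * cexpi t) = r * cos t.
Proof. by rewrite /= mul0r subr0. Qed.
Lemma Im_rCexpi (r t : R) : complex.Im (rC r * cexpi t) = r * sin t.
Proof. by rewrite /= mul0r addr0. Qed.
Lemma cmodE (z : R[i]) : cmod z = Normc.normc z.
Proof. by case: z. Qed.
Lemma cmod_ge0 (z : R[i]) : 0 <= cmod z.
Proof. exact: sqrtr_ge0. Qed.
Lemma cmodM (z w : R[i]) : cmod (z * w) = cmod z * cmod w.
Proof. by rewrite !cmodE Normc.normcM. Qed.
Lemma cmodV (z : R[i]) : cmod (z^-1) = (cmod z)^-1.
Proof. by rewrite !cmodE Normc.normcV. Qed.
Lemma sqrt_le_aux (X s : R) : 0 <= s -> X <= s ^+ 2 -> Num.sqrt X <= s.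
Proof.
move=> s0 Xs; rewrite -[s in _ <= s](@ger0_norm _ s) // -sqrtr_sqr.
by rewrite ler_sqrt // sqr_ge0.
Qed.
Lemma sqrt_ge_aux (X s : R) : s ^+ 2 <= X -> `|s| <= Num.sqrt X.
Proof.
move=> Xs; rewrite -sqrtr_sqr ler_sqrt //; exact: le_trans (sqr_ge0 s) Xs.
Qed.
Lemma cmod_le (z : R[i]) : cmod z <= `|complex.Re z| + `|complex.Im z|.
Proof.
apply: sqrt_le_aux; first by rewrite addr_ge0.
have h1 := real_normK (num_real (complex.Re z)).
have h2 := real_normK (num_real (complex.Im z)).
have : 0 <= `|complex.Re z| * `|complex.Im z| by rewrite mulr_ge0.
rewrite -h1 -h2; nra.
Qed.
Lemma Re_le_cmod (z : R[i]) : `|complex.Re z| <= cmod z.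
Proof. by apply: sqrt_ge_aux; rewrite lerDl; exact: sqr_ge0. Qed.
Lemma Im_le_cmod (z : R[i]) : `|complex.Im z| <= cmod z.
Proof. by apply: sqrt_ge_aux; rewrite lerDr; exact: sqr_ge0. Qed.
Lemma cmod_rC (r : R) : cmod (rC r) = `|r|.
Proof. by rewrite /cmod /= expr0n /= addr0 sqrtr_sqr. Qed.
Lemma cmod_cexpi (t : R) : cmod (cexpi t) = 1.
Proof. by rewrite /cmod /= cos2Dsin2 sqrtr1. Qed.

Lemma rCE (r : R) : rC r = real_complex R r. Proof. by []. Qed.

Lemma neq0_complex (z : R[i]) : complex.Re z != 0 -> z != 0.
Proof. by case: z => a b /= h; apply/negP => /eqP [] /eqP; rewrite (negbTE h). Qed.

Lemma denom_id (a beta lam delta k : R) :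
 rC (expR (- (`|k| * a))) * (rC `|k| * psi_plus a beta lam delta k + psi_minus a beta lam delta k)
  * (2 * eps_s delta) =
 rC `|k| * ((eps_s delta + eps_c beta lam delta) * (1 + eps_s delta) +
   (eps_s delta - eps_c beta lam delta) * (1 - eps_s delta) * rC (expR (- (`|k| * a))) ^+ 2).
Proof.
rewrite /psi_plus /psi_minus /chi_c.
have es0 : eps_s delta != 0 by apply: neq0_complex => /=; rewrite oppr_eq0 oner_eq0.
have ec0 : eps_c beta lam delta != 0 by apply: neq0_complex => /=; rewrite oner_eq0.
have e0 : rC (expR (- (`|k| * a))) != 0 by apply: neq0_complex => /=; rewrite gt_eqF // expR_gt0.
have -> : rC (expR (`|k| * a)) = (rC (expR (- (`|k| * a))))^-1.
  by rewrite !rCE -fmorphV expRN invrK.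
move: es0 ec0 e0.
set es := eps_s delta; set ec := eps_c beta lam delta; set e := rC (expR _); set kk := rC _.
move=> es0 ec0 e0.
have two0 : (2 : R[i]) != 0 by rewrite pnatr_eq0.
field.
by rewrite es0 ec0 e0.
Qed.

Lemma Ak_bound (a beta lam : R) rho (delta k x y K : R) : 0 < a -> 0 < delta < 1 ->
  0 <= mu_of beta lam delta -> 0 <= K -> cmod (Ik rho k) <= `|k| * K -> x < - (3 * a) ->
  cmod (Ak a beta lam rho delta k * rC (expR (`|k| * x)) * cexpi (k * y))
    <= 4 * K / 3 * expR (- (a * `|k|)).
Proof.
move=> a0 /andP[d0 d1] mu0 K0 hI hx.
rewrite !cmodM cmod_cexpi mulr1 cmod_rC (ger0_norm (expR_ge0 _)).
have hD := denom_id a beta lam delta k.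
set D := rC (expR (- (`|k| * a))) * _ in hD.
set E := expR (- (`|k| * a)).
have E0 : 0 < E by exact: expR_gt0.
set es := eps_s delta in hD; set ec := eps_c beta lam delta in hD.
set B := (es + ec) * _ + _ in hD.
have hB : 3 * E ^+ 2 <= cmod B.
  apply: le_trans (Re_le_cmod B); rewrite -normrN.
  apply: le_trans (ler_norm _).
  rewrite /B /es /ec /eps_s /eps_c /rC /= ; set m := mu_of _ _ _.
  have h1 : 0 <= delta * m by rewrite mulr_ge0 // ltW.
  have h2 : 0 <= E ^+ 2 * (delta * m) by rewrite mulr_ge0 // sqr_ge0.
  have h3 : E ^+ 2 * (delta ^+ 2 - 1) <= 0.
    rewrite mulr_ge0_le0 ?sqr_ge0 // subr_le0 expr_le1 ?ltW //.
  rewrite -/E; rewrite expr2 in h2 h3 *; nra.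
have hes : cmod (2 * es) <= 4.
  rewrite cmodM /es /eps_s /cmod /= addr0 expr0n /= addr0 sqrtr_sqr.
  have : Num.sqrt ((-1) ^+ 2 + delta ^+ 2) <= 2.
    apply: sqrt_le_aux => //; rewrite !expr2; nra.
  have : 0 <= Num.sqrt ((-1) ^+ 2 + delta ^+ 2) by exact: sqrtr_ge0.
  rewrite ger0_norm //; lra.
have es0 : 0 < cmod (2 * es).
  rewrite lt_def cmod_ge0 andbT; apply/negP => /eqP.
  rewrite cmodE => /Normc.eq0_normc /eqP; rewrite mulf_eq0 pnatr_eq0 /=.
  by apply/negP; apply: neq0_complex => /=; rewrite oppr_eq0 oner_eq0.
have [k0|kn0] := eqVneq k 0.
  have : D = 0.
    apply/eqP; move: hD; rewrite k0 normr0 /rC mul0r => /eqP.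
    rewrite mulf_eq0 => /orP[] // /eqP h; move: es0; rewrite h.
    by rewrite /cmod /= expr0n /= addr0 sqrtr0 ltxx.
  rewrite /Ak -/D => ->; rewrite invr0.
  rewrite {2}/cmod /= expr0n /= addr0 sqrtr0 mulr0 mul0r.
  by rewrite mulr_ge0 ?expR_ge0 // divr_ge0 // mulr_ge0.
have kp : 0 < `|k| by rewrite normr_gt0.
have hDc : cmod D * cmod (2 * es) = `|k| * cmod B.
  by rewrite -cmodM hD cmodM cmod_rC normr_id.
have Dp : 3 * `|k| * E ^+ 2 / 4 <= cmod D.
  rewrite ler_pdivrMr //; apply: le_trans (_ : `|k| * cmod B <= _).
    nra.
  rewrite -hDc; apply: ler_wpM2l => //; exact: cmod_ge0.
have Dpos : 0 < cmod D by apply: lt_le_trans Dp; rewrite divr_gt0 // !mulr_gt0 // exprn_gt0.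
rewrite /Ak -/D cmodV.
have hA : cmod (Ik rho k) / cmod D <= 4 * K / 3 / E ^+ 2.
  rewrite ler_pdivrMr // (le_trans hI) //.
  have -> : 4 * K / 3 / E ^+ 2 * cmod D = (4 * K / 3 / E ^+ 2) * cmod D by [].
  apply: le_trans (_ : `|k| * K <= 4 * K / 3 / E ^+ 2 * (3 * `|k| * E ^+ 2 / 4)) _.
    rewrite le_eqVlt; apply/orP; left; apply/eqP; field.
    by rewrite gt_eqF.
  apply: ler_wpM2l Dp; apply: divr_ge0; [apply: divr_ge0 => //; exact: mulr_ge0 | exact: sqr_ge0].
apply: le_trans (_ : 4 * K / 3 / E ^+ 2 * expR (`|k| * x) <= _).
  by rewrite ler_wpM2r // expR_ge0.
rewrite -mulrA ler_wpM2l //; first by rewrite divr_ge0 // mulr_ge0.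
rewrite /E -expRM_natl -expRN mulrC -expRD ler_expR.
have : 0 <= `|k| by [].
nra.
Qed.
End C.




Section G.
Variable R : realType.
Local Notation mu := (@lebR R).
Local Notation mu2 := (product_measure1 (@lebR R) (@lebR R)).

Lemma meas_snd (g : R -> R) : continuous g -> measurable_fun setT (fun p : R * R => g p.2).
Proof. by move=> cg; exact: measurableT_comp (continuous_measurable_fun cg) measurable_snd. Qed.
Lemma meas_fst (g : R -> R) : continuous g -> measurable_fun setT (fun p : R * R => g p.1).
Proof. by move=> cg; exact: measurableT_comp (continuous_measurable_fun cg) measurable_fst. Qed.

Lemma cont_cosk (k : R) : continuous (fun y : R => cos (- (k * y))).
Proof.
move=> x; apply: continuous_comp; last exact: continuous_cos.
by apply: continuousN; apply: continuousM; [exact: cst_continuous | exact: cvg_id].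
Qed.
Lemma cont_sink (k : R) : continuous (fun y : R => sin (- (k * y))).
Proof.
move=> x; apply: continuous_comp; last exact: continuous_sin.
by apply: continuousN; apply: continuousM; [exact: cst_continuous | exact: cvg_id].
Qed.
Lemma cont_expk (k : R) : continuous (fun s : R => expR (- (`|k| * s))).
Proof.
move=> x; apply: continuous_comp; last exact: continuous_expR.
by apply: continuousN; apply: continuousM; [exact: cst_continuous | exact: cvg_id].
Qed.


Lemma Ik_bound (a : R) rho : 0 < a -> in_P a rho ->
  exists K, 0 <= K /\ forall k, cmod (Ik rho k) <= `|k| * K.
Proof.
move=> a0 [mr [[M hM] [[x0 [x1 [y0 [y1 [ax0 hsupp]]]]] [_ hzero]]]].
have M0 : 0 <= M := le_trans (normr_ge0 _) (hM 0 0).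
set c := M * (`|x1| + `|y0| + `|y1|).
have c0 : 0 <= c by rewrite mulr_ge0 // !addr_ge0.
pose box : set (R * R) := `[x0, x1] `*` `[y0, y1].
pose K0 := Rintegral mu2 setT (fun p => \1_box p : R).
have K00 : 0 <= K0 by apply: Rintegral_ge0 => p _; rewrite indicE.
exists (2 * (c * K0)); split; first by rewrite mulr_ge0 // mulr_ge0.
move=> k.
have supp : forall F : R -> R -> R, (forall s y, rho s y = 0 -> F s y = 0) ->
    forall s y, F s y != 0 -> (x0 <= s <= x1) /\ (y0 <= y <= y1).
  move=> F hF s y nz; apply: hsupp; apply/negP => /eqP r0.
  by move: nz; rewrite hF // eqxx.
have gen : forall F : R -> R -> R, measurable_fun setT (fun p : R * R => F p.1 p.2) ->
    (forall s y, rho s y = 0 -> F s y = 0) ->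
    (forall s y, rho s y != 0 -> `|F s y| <= `|k| * c) ->
    `|Rintegral mu2 setT (fun p => F p.1 p.2)| <= `|k| * c * K0.
  move=> F mF hF hb.
  rewrite /K0 -RintegralZl //; last exact: box_integrable.
  apply: Rint_abs_le.
    move=> [s y] /=.
    have [r0|r0] := eqVneq (rho s y) 0.
      by rewrite hF // normr0 mulr_ge0 // ?mulr_ge0 // indicE.
    have [h1 h2] := hsupp s y r0.
    rewrite indicE (_ : (s, y) \in box = true) ?mulr1; first exact: hb.
    by apply/mem_set; split; rewrite /= in_itv /=.
  have hi := integrableZl measurableT (`|k| * c) (box_integrable _ x0 x1 y0 y1).
  apply: eq_integrable hi => // p _ /=; by rewrite EFinM.
have hbi : forall F : R -> R -> R, measurable_fun setT (fun p : R * R => F p.1 p.2) ->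
    (forall s y, rho s y = 0 -> F s y = 0) -> (forall s y, `|F s y| <= M) ->
    mu2.-integrable setT (fun p => (F p.1 p.2)%:E) /\
    (forall s, mu.-integrable setT (EFin \o F s)).
  move=> F mF hF hM'; exact: bounded_integrable mF hM' (supp F hF).
have mc := meas_snd _ (cont_cosk k).
have ms := meas_snd _ (cont_sink k).
have me := meas_fst _ (cont_expk k).
pose Fc := fun s y => rho s y * cos (- (k * y)).
pose Fr := fun s y => rho s y * cos (- (k * y)) * expR (- (`|k| * s)).
pose Fs := fun s y => rho s y * sin (- (k * y)).
pose Fi := fun s y => rho s y * sin (- (k * y)) * expR (- (`|k| * s)).
have mFc : measurable_fun setT (fun p : R * R => Fc p.1 p.2) := measurable_funM mr mc.
have mFs : measurable_fun setT (fun p : R * R => Fs p.1 p.2) := measurable_funM mr ms.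
have mFr : measurable_fun setT (fun p : R * R => Fr p.1 p.2) := measurable_funM mFc me.
have mFi : measurable_fun setT (fun p : R * R => Fi p.1 p.2) := measurable_funM mFs me.
have e1 : forall s, 0 <= s -> `|expR (- (`|k| * s))| <= 1.
  move=> s s0; rewrite ger0_norm ?expR_ge0 // -expR0 ler_expR oppr_le0 mulr_ge0 //.
have sp : forall s y, rho s y != 0 -> 0 <= s.
  move=> s y /hsupp [/andP[h _] _]; apply: le_trans h; apply: ltW; exact: lt_trans ax0.
have [iFc sFc] : mu2.-integrable setT (fun p => (Fc p.1 p.2)%:E) /\
    (forall s, mu.-integrable setT (EFin \o Fc s)).
  apply: hbi; [exact: mFc | by move=> s y r0; rewrite /Fc r0 !mul0r | move=> s y; rewrite /Fc].
  by rewrite normrM; apply: le_trans (_ : `|rho s y| * 1 <= _);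
    [rewrite ler_wpM2l // cos_max | rewrite mulr1].
have [iFs sFs] : mu2.-integrable setT (fun p => (Fs p.1 p.2)%:E) /\
    (forall s, mu.-integrable setT (EFin \o Fs s)).
  apply: hbi; [exact: mFs | by move=> s y r0; rewrite /Fs r0 !mul0r | move=> s y; rewrite /Fs].
  by rewrite normrM; apply: le_trans (_ : `|rho s y| * 1 <= _);
    [rewrite ler_wpM2l // sin_max | rewrite mulr1].
have bndE : forall s y (u : R), `|u| <= 1 -> `|rho s y * u * expR (- (`|k| * s))| <= M.
  move=> s y u u1.
  have [r0|r0] := eqVneq (rho s y) 0; first by rewrite r0 !mul0r normr0.
  rewrite !normrM; apply: le_trans (_ : `|rho s y| * 1 * 1 <= _); last by rewrite !mulr1.
  by rewrite ler_pM // ?mulr_ge0 // ?e1 ?(sp s y) // ler_wpM2l.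
have [iFr sFr] : mu2.-integrable setT (fun p => (Fr p.1 p.2)%:E) /\
    (forall s, mu.-integrable setT (EFin \o Fr s)).
  apply: hbi; [exact: mFr | by move=> s y r0; rewrite /Fr r0 !mul0r | move=> s y; rewrite /Fr].
  exact: bndE (cos_max _).
have [iFi sFi] : mu2.-integrable setT (fun p => (Fi p.1 p.2)%:E) /\
    (forall s, mu.-integrable setT (EFin \o Fi s)).
  apply: hbi; [exact: mFi | by move=> s y r0; rewrite /Fi r0 !mul0r | move=> s y; rewrite /Fi].
  exact: bndE (sin_max _).
have eRe : complex.Re (Ik rho k) = Rintegral mu2 setT (fun p => Fr p.1 p.2).
  rewrite /Ik /cint /= -(fubR _ _ iFr sFr).
  apply: eq_Rintegral => s _.
  rewrite mulr0 subr0 -RintegralZr //.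
    by apply: eq_Rintegral => t _; rewrite /Fr mul0r subr0.
  have h := sFc s; apply: eq_integrable h => // t _ /=; by rewrite /Fc mul0r subr0.
have eIm : complex.Im (Ik rho k) = Rintegral mu2 setT (fun p => Fi p.1 p.2).
  rewrite /Ik /cint /= -(fubR _ _ iFi sFi).
  apply: eq_Rintegral => s _.
  rewrite mulr0 add0r -RintegralZr //.
    by apply: eq_Rintegral => t _; rewrite /Fi mul0r addr0.
  have h := sFs s; apply: eq_integrable h => // t _ /=; by rewrite /Fs mul0r addr0.
have r0 : Rintegral mu2 setT (fun p => rho p.1 p.2) = 0 by rewrite /Rintegral hzero.
have [iR _] : mu2.-integrable setT (fun p => (rho p.1 p.2)%:E) /\
    (forall s, mu.-integrable setT (EFin \o rho s)).
  by apply: hbi.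
have bRe : `|complex.Re (Ik rho k)| <= `|k| * c * K0.
  rewrite eRe -[X in `|X|]subr0 -[X in _ - X]r0 -RintegralB //.
  apply: (gen (fun s y => Fr s y - rho s y)).
  - exact: measurable_funB mFr mr.
  - by move=> s y r00; rewrite /Fr r00 !mul0r subr0.
  - move=> s y nz; have [hs hy] := hsupp s y nz.
    apply: pt_re => //; rewrite (sp s y nz) /=; by case/andP: hs.
have bIm : `|complex.Im (Ik rho k)| <= `|k| * c * K0.
  rewrite eIm; apply: (gen Fi mFi).
  - by move=> s y r00; rewrite /Fi r00 !mul0r.
  - move=> s y nz; have [hs hy] := hsupp s y nz.
    by apply: pt_im => //; exact: (sp s y nz).
apply: le_trans (cmod_le _ _) _.
have -> : `|k| * (2 * (c * K0)) = `|k| * c * K0 + `|k| * c * K0 by ring.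
exact: lerD.
Qed.
End G.

Theorem lemma6p3 (R : realType) (a beta lam delta_mu : R) (rho : R -> R -> R) :
  0 < a -> 0 < beta ->
  (beta < 1 -> 0 < lam) -> (beta = 1 -> -1 <= lam) -> (1 < beta -> lam != 0) ->
  0 < delta_mu < 1 ->
  (forall delta, 0 < delta <= delta_mu -> 0 <= mu_of beta lam delta) ->
  in_P a rho ->
  exists C9 : R, 0 < C9 /\
    forall delta x y, 0 < delta <= delta_mu -> x < - (3 * a) ->
      cmod (Vc a beta lam rho delta x y) <= C9.
Proof.
move=> a0 _ _ _ _ /andP[dm0 dm1] hmu hP.
have [K [K0 hK]] := Ik_bound _ _ _ a0 hP.
pose g := fun k : R => 4 * K / 3 * expR (- (a * `|k|)).
have ig : (@lebR R).-integrable setT (EFin \o g).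
  have hi := integrableZl measurableT (4 * K / 3) (integrable_expabs _ _ a0).
  by apply: eq_integrable hi => // t _ /=; rewrite EFinM.
pose G := Rintegral (@lebR R) setT g.
have G0 : 0 <= G.
  apply: Rintegral_ge0 => k _; rewrite /g mulr_ge0 ?expR_ge0 //.
  by rewrite divr_ge0 // mulr_ge0.
have pi0 : 0 < (2 * pi)^-1 :> R by rewrite invr_gt0 mulr_gt0 // pi_gt0.
exists ((2 * pi)^-1 * (2 * G) + 1); split.
  by apply: ltr_wpDl => //; rewrite mulr_ge0 // ?mulr_ge0 // ltW.
move=> delta x y /andP[d0 dle] hx.
have hd : 0 < delta < 1 by rewrite d0 /=; exact: le_lt_trans dle dm1.
have hm := hmu delta (introT andP (conj d0 dle)).
rewrite /Vc cmodM cmod_rC (ger0_norm (ltW pi0)).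
set f := fun k => _.
have hf : forall k, cmod (f k) <= g k.
  move=> k; exact: (Ak_bound _ _ _ _ _ _ _ _ _ _ a0 hd hm K0 (hK k) hx).
have hRe : `|complex.Re (cint f)| <= G.
  apply: Rint_abs_le => // k; apply: le_trans (Re_le_cmod _ _) (hf k).
have hIm : `|complex.Im (cint f)| <= G.
  apply: Rint_abs_le => // k; apply: le_trans (Im_le_cmod _ _) (hf k).
have h1 : (2 * pi)^-1 * cmod (cint f) <= (2 * pi)^-1 * (2 * G).
  apply: ler_wpM2l; first exact: ltW.
  apply: le_trans (cmod_le _ _) _; lra.
apply: le_trans h1 _; rewrite lerDl //.
Qed.
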